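(* Let $(G,\mathcal{B}_1,\mathcal{B}_2)$ be a Rota-Baxter system of groups with descendent operation $\circ$. For every $t\in G$, $G_t=G\circ e_t:=\{a\circ e_t\mid a\in G\}$, and $(G_t,\circ)$ is a group with identity element $e_t$.
   Context: A Rota-Baxter system of groups is a triple $(G,\mathcal{B}_1,\mathcal{B}_2)$ where $G$ is a group and $\mathcal{B}_1,\mathcal{B}_2:G\to G$ are maps such that for all $a,b\in G$: $\mathcal{B}_1(a)\mathcal{B}_1(b)=\mathcal{B}_1(\mathcal{B}_1(a)b\mathcal{B}_2(a))$ and $\mathcal{B}_2(b)\mathcal{B}_2(a)=\mathcal{B}_2(\mathcal{B}_1(a)b\mathcal{B}_2(a))$. Descendent operation: $a\circ b=\mathcal{B}_1(a)b\mathcal{B}_2(a)$. For $t\in G$: $e_t=\mathcal{B}_1(t)^{-1}t\mathcal{B}_2(t)^{-1}$ and $G_t=\{a\in G\mid a\circ e_t=a\}$. *)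

(* Defs.v *)
Set Implicit Arguments.

Record is_group (G : Type) (mul : G -> G -> G) (one : G) (inv : G -> G) : Prop := {
  grp_assoc : forall a b c, mul a (mul b c) = mul (mul a b) c;
  grp_mul1g : forall a, mul one a = a;
  grp_mulg1 : forall a, mul a one = a;
  grp_mulVg : forall a, mul (inv a) a = one;
  grp_mulgV : forall a, mul a (inv a) = one
}.

Definition is_RB_system (G : Type) (mul : G -> G -> G) (B1 B2 : G -> G) : Prop :=
  forall a b : G,
    mul (B1 a) (B1 b) = B1 (mul (mul (B1 a) b) (B2 a)) /\
    mul (B2 b) (B2 a) = B2 (mul (mul (B1 a) b) (B2 a)).

Definition desc_op (G : Type) (mul : G -> G -> G) (B1 B2 : G -> G) (a b : G) : G :=
  mul (mul (B1 a) b) (B2 a).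

Definition e_of (G : Type) (mul : G -> G -> G) (inv : G -> G) (B1 B2 : G -> G) (t : G) : G :=
  mul (mul (inv (B1 t)) t) (inv (B2 t)).

Definition G_sub (G : Type) (mul : G -> G -> G) (inv : G -> G) (B1 B2 : G -> G) (t : G) : G -> Prop :=
  fun a => desc_op mul B1 B2 a (e_of mul inv B1 B2 t) = a.

Definition is_group_on (G : Type) (S : G -> Prop) (op : G -> G -> G) (e : G) : Prop :=
  S e /\
  (forall a b, S a -> S b -> S (op a b)) /\
  (forall a b c, S a -> S b -> S c -> op a (op b c) = op (op a b) c) /\
  (forall a, S a -> op e a = a /\ op a e = a) /\
  (forall a, S a -> exists b, S b /\ op a b = e /\ op b a = e).

(* Main.v *)
Require Import Defs.

Theorem lemma4p1 (G : Type) (mul : G -> G -> G) (one : G) (inv : G -> G)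
  (B1 B2 : G -> G)
  (HG : is_group mul one inv)
  (HRB : is_RB_system mul B1 B2)
  (t : G) :
  (forall x : G,
     G_sub mul inv B1 B2 t x <->
     exists a : G, x = desc_op mul B1 B2 a (e_of mul inv B1 B2 t)) /\
  is_group_on (G_sub mul inv B1 B2 t) (desc_op mul B1 B2) (e_of mul inv B1 B2 t).
Proof.
  destruct HG as [As M1 M1' MV MV'].
  set (o := desc_op mul B1 B2).
  set (e := e_of mul inv B1 B2 t).
  assert (HB1 : forall a b, B1 (o a b) = mul (B1 a) (B1 b))
    by (intros a b; symmetry; apply (HRB a b)).
  assert (HB2 : forall a b, B2 (o a b) = mul (B2 b) (B2 a))
    by (intros a b; symmetry; apply (HRB a b)).
  assert (Ass : forall a b c, o a (o b c) = o (o a b) c).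
  { intros a b c. change (o (o a b) c) with (mul (mul (B1 (o a b)) c) (B2 (o a b))).
    rewrite HB1, HB2. unfold o, desc_op.
    rewrite !As. reflexivity. }
  assert (te : o t e = t).
  { unfold o, e, desc_op, e_of.
    rewrite !As, MV', M1, <- (As _ (inv (B2 t))), MV, M1'. reflexivity. }
  assert (cancl : forall x y, mul x y = x -> y = one).
  { intros x y H. rewrite <- (M1 y), <- (MV x), <- As, H. reflexivity. }
  assert (cancr : forall x y, mul y x = x -> y = one).
  { intros x y H. rewrite <- (M1' y), <- (MV' x), As, H. reflexivity. }
  assert (B1e : B1 e = one).
  { apply (cancl (B1 t)). rewrite <- HB1, te. reflexivity. }
  assert (B2e : B2 e = one).
  { apply (cancr (B2 t)). rewrite <- HB2, te. reflexivity. }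
  assert (el : forall b, o e b = b).
  { intros b. unfold o, desc_op. rewrite B1e, B2e, M1, M1'. reflexivity. }
  assert (ee : o e e = e) by apply el.
  assert (memb : forall a, G_sub mul inv B1 B2 t (o a e)).
  { intros a. unfold G_sub. fold o e. rewrite <- Ass, ee. reflexivity. }
  set (ri := fun x => o (mul (mul (inv (B1 x)) e) (inv (B2 x))) e).
  assert (riP : forall x, o x (ri x) = e).
  { intros x. unfold ri. rewrite Ass. unfold o at 2. unfold desc_op.
    rewrite !As, MV', M1, <- (As _ (inv (B2 x))), MV, M1'. apply ee. }
  split.
  - intros x. split.
    + intros H. exists x. symmetry. exact H.
    + intros [a ->]. apply memb.
  - unfold is_group_on. fold o e.
    assert (Gs : forall a, G_sub mul inv B1 B2 t a <-> o a e = a) by (intros; split; auto).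
    split; [ apply Gs; exact ee |].
    split; [ intros a b _ Hb; unfold G_sub in Hb |- *; fold o e in Hb |- *; rewrite <- Ass, Hb; reflexivity |].
    split; [ intros; apply Ass |].
    split; [ intros a Ha; unfold G_sub in Ha; fold o e in Ha; split; [apply el | exact Ha] |].
    intros a Ha. unfold G_sub in Ha; fold o e in Ha. exists (ri a). split; [ apply memb |].
    split; [ apply riP |].
    set (b := ri a).
    assert (Hb : o b e = b) by (unfold b, ri; rewrite <- Ass, ee; reflexivity).
    transitivity (o (o b a) (o b (ri b))).
    { rewrite (riP b), <- Ass, Ha. reflexivity. }
    replace (o (o b a) (o b (ri b))) with (o b (o (o a b) (ri b))).
    2:{ rewrite !Ass. reflexivity. }
    replace (o a b) with e by (symmetry; exact (riP a)). rewrite el. exact (riP b).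
Qed.
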